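(* Let $\mathcal{M}\subset\mathbb{R}^n$ be a locally symmetric $C^2$ submanifold and let $\sigma_*\in\Sigma^n$ be such that $\mathcal{M}\cap B(y,\rho)\subseteq\Delta(\sigma_* )$ for some $y\in\mathcal{M}$ and $\rho>0$. Then for every $\bar x\in\mathcal{M}$ and every $\delta>0$, $\mathcal{M}\cap\Delta(\sigma_* )\cap B(\bar x,\delta)\ne\emptyset$.
   Context: $\Sigma^n$ permutations of $\mathbb{N}_n$ acting by $(\sigma x)_i=x_{\sigma^{-1}(i)}$; $P(\sigma)$ orbit partition; $P(x)$ partition by equal coordinates; $\Delta(\sigma)=\{x:P(x)=P(\sigma)\}$. $\mathbb{R}^n_\ge=\{x:x_1\ge\cdots\ge x_n\}$; $B$ open ball. A set $S$ is locally symmetric if $S\cap\mathbb{R}^n_\ge\ne\emptyset$ and each $x\in S$ has $\delta>0$ with $\sigma(S\cap B(x,\delta))=S\cap B(x,\delta)$ for all $y\in S\cap B(x,\delta)$, all $\sigma$ with $\sigma y=y$. A locally symmetric $C^2$ submanifold is a connected $C^2$ submanifold without boundary which is locally symmetric. *)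

(* Defs.v *)
From HB Require Import structures.
From mathcomp Require Import all_boot all_order all_algebra all_fingroup.
From mathcomp Require Import all_classical all_reals all_analysis.
Set Implicit Arguments. Unset Strict Implicit. Unset Printing Implicit Defensive.
Import Order.TTheory GRing.Theory Num.Theory.
Import numFieldNormedType.Exports.
Local Open Scope classical_set_scope.
Local Open Scope ring_scope.

Section Defs.
Variables (R : realType) (n : nat).
Local Notation vec := 'rV[R]_n.

Definition pact (s : {perm 'I_n}) (x : vec) : vec := \row_i x 0 (s^-1 i)%g.

Definition Pperm (s : {perm 'I_n}) : {set {set 'I_n}} := porbits s.

Definition Pvec (x : vec) : {set {set 'I_n}} :=
  [set (finset (fun j => x 0 j == x 0 i)) | i : 'I_n]%SET.

Definition Delta (s : {perm 'I_n}) : set vec := [set x | Pvec x = Pperm s].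

Definition Rge_cone : set vec := [set x | forall i j : 'I_n, (i <= j)%N -> x 0 j <= x 0 i].

Definition enorm (x : vec) : R := Num.sqrt (\sum_i x 0 i ^+ 2).
Definition eball (x : vec) (r : R) : set vec := [set z | enorm (z - x) < r].

Definition locally_symmetric (S : set vec) : Prop :=
  (S `&` Rge_cone !=set0) /\
  forall x, S x -> exists2 d : R, 0 < d &
    forall y, (S `&` eball x d) y ->
      forall s : {perm 'I_n}, pact s y = y ->
        pact s @` (S `&` eball x d) = S `&` eball x d.

Definition evec (j : 'I_n) : vec := delta_mx 0 j.
Definition pderiv m (j : 'I_n) (F : vec -> 'rV[R]_m) : vec -> 'rV[R]_m :=
  fun x => 'D_(evec j) F x.

Definition C2_on m (U : set vec) (F : vec -> 'rV[R]_m) : Prop :=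
  forall x, U x ->
    [/\ {for x, continuous F},
        forall j, derivable F x (evec j) /\ {for x, continuous (pderiv j F)}
      & forall j k, derivable (pderiv j F) x (evec k) /\
                    {for x, continuous (pderiv k (pderiv j F))}].

Definition jacobian m (F : vec -> 'rV[R]_m) (x : vec) : 'M[R]_(m, n) :=
  \matrix_(i < m, j < n) (pderiv j F x) 0 i.

Definition C2_submanifold (M : set vec) : Prop :=
  exists m : nat, forall p, M p ->
    exists U : set vec, exists F : vec -> 'rV[R]_m,
      [/\ open U, U p, C2_on U F,
          (forall x, U x -> \rank (jacobian F x) = m)
        & M `&` U = U `&` [set x | F x = 0]].

Definition locally_symmetric_C2_submanifold (M : set vec) : Prop :=
  [/\ connected M, C2_submanifold M & locally_symmetric M].

End Defs.

(* Main.v *)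
Require Import Defs.
From HB Require Import structures.
From mathcomp Require Import all_boot all_order all_algebra all_fingroup.
From mathcomp Require Import all_classical all_reals all_analysis.
From mathcomp Require Import lra ring.
Import Order.TTheory GRing.Theory Num.Theory.
Import numFieldNormedType.Exports.
Import Num.Def.
Local Open Scope classical_set_scope.
Local Open Scope ring_scope.
Set Implicit Arguments. Unset Strict Implicit. Unset Printing Implicit Defensive.
Section Basics.
Variable R : realType.

Lemma coord_le_norm m n (v : 'M[R]_(m,n)) i j : `|v i j| <= `|v|.
Proof.
rewrite [leRHS]/Num.Def.normr /= mx_normrE; apply/bigmax_geP; right => /=.
by exists (i, j).
Qed.

Lemma norm_le_coord m n (v : 'M[R]_(m,n)) c :
  0 <= c -> (forall i j, `|v i j| <= c) -> `|v| <= c.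
Proof.
move=> c0 H; rewrite [leLHS]/Num.Def.normr /= mx_normrE.
by apply: bigmax_le => // -[i j] _; exact: H.
Qed.

Definition mxsum m n (B : 'M[R]_(m,n)) : R := \sum_i \sum_j `|B i j|.

Lemma mxsum_ge0 m n (B : 'M[R]_(m,n)) : 0 <= mxsum B.
Proof. by apply: sumr_ge0 => i _; apply: sumr_ge0. Qed.

Lemma norm_mulmx m n (u : 'rV[R]_m) (B : 'M[R]_(m,n)) :
  `|u *m B| <= `|u| * mxsum B.
Proof.
apply: norm_le_coord; first by rewrite mulr_ge0 // mxsum_ge0.
move=> i k; rewrite mxE (le_trans (ler_norm_sum _ _ _)) //.
rewrite /mxsum mulr_sumr; apply: ler_sum => j _.
rewrite normrM (ord1 i) ler_pM //.
  exact: coord_le_norm.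
by rewrite (bigD1 k) //= lerDl sumr_ge0.
Qed.

Lemma norm_le_enorm n (v : 'rV[R]_n) : `|v| <= enorm v.
Proof.
apply: norm_le_coord; first exact: sqrtr_ge0.
move=> i j; rewrite (ord1 i) /enorm -sqrtr_sqr ler_sqrt; last first.
  by apply: sumr_ge0 => k _; exact: sqr_ge0.
by rewrite (bigD1 j) //= lerDl sumr_ge0 // => k _; exact: sqr_ge0.
Qed.

Lemma enorm_le n (v : 'rV[R]_n) : enorm v <= n.+1%:R * `|v|.
Proof.
rewrite /enorm -[leRHS]ger0_norm ?mulr_ge0 // -sqrtr_sqr ler_sqrt; last first.
  exact: sqr_ge0.
apply: (@le_trans _ _ (\sum_(i < n) `|v| ^+ 2)).
  apply: ler_sum => i _; rewrite -real_normK ?num_real //.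
  by rewrite lerXn2r // ?nnegrE // coord_le_norm.
rewrite sumr_const card_ord -[_ *+ n]mulr_natl exprMn.
apply: ler_wpM2r; first exact: sqr_ge0.
rewrite -natrX ler_nat; case: n {v} => // n.
by rewrite (leq_trans (leqnSn _)) // expnS leq_pmulr.
Qed.

End Basics.
Section Perm.
Variables (R : realType) (n : nat).
Local Notation vec := 'rV[R]_n.

Definition Lpat (x z : vec) := forall i j, x 0 i = x 0 j -> z 0 i = z 0 j.

Lemma Pvec_eqP (x z : vec) :
  (forall i j, (x 0 i == x 0 j) = (z 0 i == z 0 j)) -> Pvec x = Pvec z.
Proof.
move=> H; apply: eq_imset => i; apply/setP => j; by rewrite !inE H.
Qed.

Lemma Pvec_eq_rel (x z : vec) :
  Pvec x = Pvec z -> forall i j, (x 0 i == x 0 j) = (z 0 i == z 0 j).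
Proof.
move=> E i j.
have : finset (fun k => x 0 k == x 0 i) \in Pvec z by rewrite -E; apply: imset_f.
case/imsetP => k _ Ek.
have := congr1 (fun S : {set 'I_n} => i \in S) Ek; rewrite !inE eqxx => /esym/eqP Hi.
have := congr1 (fun S : {set 'I_n} => j \in S) Ek; rewrite !inE Hi => Hj.
by rewrite eq_sym Hj eq_sym.
Qed.

Lemma Lpat_Pvec (x z : vec) : Lpat x z -> Lpat z x -> Pvec x = Pvec z.
Proof.
move=> H1 H2; apply: Pvec_eqP => i j.
apply/eqP/eqP => [/H1|/H2] //.
Qed.

Lemma Pvec_Lpat (x z : vec) : Pvec x = Pvec z -> Lpat x z.
Proof. by move=> /Pvec_eq_rel H i j /eqP; rewrite H => /eqP. Qed.

Lemma pactE (s : {perm 'I_n}) (x : vec) j : pact s x 0 j = x 0 (s^-1 j)%g.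
Proof. by rewrite mxE. Qed.

Lemma pact_tperm_fix (x : vec) i j : x 0 i = x 0 j -> pact (tperm i j) x = x.
Proof.
move=> E; apply/rowP => k; rewrite pactE tpermV.
case: tpermP => [->|->|] //.
Qed.

Lemma pactB (s : {perm 'I_n}) (a b : vec) : pact s (a - b) = pact s a - pact s b.
Proof. by apply/rowP => k; rewrite !mxE. Qed.

Lemma norm_pact (s : {perm 'I_n}) (v : vec) : `|pact s v| <= `|v|.
Proof.
apply: norm_le_coord => // i j; rewrite (ord1 i) pactE; exact: coord_le_norm.
Qed.

Lemma pact_tperm_diff (q : vec) i j : i != j ->
  pact (tperm i j) q - q = (q 0 j - q 0 i) *: (evec R i - evec R j).
Proof.
move=> ij; apply/rowP => k; rewrite !mxE tpermV /=.
case: tpermP => [->|->|/eqP ki /eqP kj].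
- by rewrite eqxx (negbTE ij) /=; lra.
- by rewrite eqxx eq_sym (negbTE ij) /=; lra.
- by rewrite (negbTE ki) (negbTE kj) /=; lra.
Qed.

Lemma evec_diff_norm (i j : 'I_n) : i != j -> `|evec R i - evec R j : vec| <= 1.
Proof.
move=> ij; apply: norm_le_coord => // a k; rewrite !mxE (ord1 a) /=.
have [->|ki] := eqVneq k i.
  by rewrite (negbTE ij) subr0 normr1.
by case: (k == j); rewrite /= ?subrr ?normr0 // sub0r normrN normr1.
Qed.

End Perm.
Section Analysis.
Variable R : realType.

Lemma line_deriv m n (F : 'rV[R]_n -> 'rV[R]_m) (p v : 'rV[R]_n) k t :
  derivable F (p + t *: v) v ->
  is_derive t 1 (fun s : R => F (p + s *: v) 0 k) ('D_v F (p + t *: v) 0 k).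
Proof.
move=> dF.
set Q := fun h : R => h^-1 *: ((F \o shift (p + t *: v)) (h *: v) - F (p + t *: v)).
have HQ : Q @ 0^' --> 'D_v F (p + t *: v) := dF.
have HQk : (fun h => Q h 0 k) @ 0^' --> 'D_v F (p + t *: v) 0 k.
  exact: (continuous_cvg _ (@coord_continuous _ _ _ 0 k _) HQ).
set G := fun s : R => F (p + s *: v) 0 k.
have EQ : (fun h : R => h^-1 *: ((G \o shift t) (h *: 1) - G t)) = (fun h => Q h 0 k).
  apply/funext => h; rewrite /G /Q /= !mxE.
  congr (_ * (_ - _)); congr (F _ 0 k).
  by rewrite [h%:A]mulr1 scalerDl addrCA addrA [_ + p]addrC.
split.
  by apply/cvg_ex; exists ('D_v F (p + t *: v) 0 k); rewrite /= EQ.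
by rewrite /derive /= EQ; apply: cvg_lim.
Qed.

End Analysis.
Section MVT.
Variable R : realType.

Lemma mvt_est (g dg : R -> R) (h c e : R) :
  (forall t, (0 <= t <= h) \/ (h <= t <= 0) ->
     is_derive t 1 g (dg t) /\ `|dg t - c| <= e) ->
  `|g h - g 0 - c * h| <= e * `|h|.
Proof.
move=> H.
have cont (a b : R) : (forall t, a <= t <= b -> derivable g t 1) ->
    {within `[a, b], continuous g}.
  move=> D; apply: derivable_within_continuous => t; rewrite in_itv /= => /D.
  done.
have [h0|h0] := leP 0 h.
- have H1 : forall t, 0 <= t <= h -> is_derive t 1 g (dg t) /\ `|dg t - c| <= e.
    by move=> t tin; apply: H; left.
  have D1 : forall t, t \in `]0, h[ -> is_derive t 1 g (dg t).
    by move=> t; rewrite in_itv /= => /andP[/ltW t1 /ltW t2]; apply: (H1 t _).1; rewrite t1 t2.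
  have C1 : {within `[0, h], continuous g}.
    by apply: cont => t /H1 [[? _] _].
  have [xi + E] := MVT_segment h0 D1 C1.
  rewrite in_itv /= => /H1 [_ Hd].
  have -> : g h - g 0 - c * h = (dg xi - c) * h by rewrite E; ring.
  by rewrite normrM ler_wpM2r.
- have H1 : forall t, h <= t <= 0 -> is_derive t 1 g (dg t) /\ `|dg t - c| <= e.
    by move=> t tin; apply: H; right.
  have D1 : forall t, t \in `]h, 0[ -> is_derive t 1 g (dg t).
    by move=> t; rewrite in_itv /= => /andP[/ltW t1 /ltW t2]; apply: (H1 t _).1; rewrite t1 t2.
  have C1 : {within `[h, 0], continuous g}.
    by apply: cont => t /H1 [[? _] _].
  have [xi + E] := MVT_segment (ltW h0) D1 C1.
  rewrite in_itv /= => /H1 [_ Hd].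
  have -> : g h - g 0 - c * h = - ((dg xi - c) * (0 - h)) by rewrite mulrBl -E; ring.
  by rewrite normrN normrM sub0r normrN ler_wpM2r.
Qed.

End MVT.
Section Kest.
Variable R : realType.

Lemma coordB m n (a b : 'M[R]_(m,n)) i j : (a - b) i j = a i j - b i j.
Proof. by rewrite !mxE. Qed.

Lemma coord_le_normB m n (a b : 'M[R]_(m,n)) i j : `|a i j - b i j| <= `|a - b|.
Proof. by rewrite -coordB coord_le_norm. Qed.

Definition path_pt n (z z' : 'rV[R]_n) (l : nat) : 'rV[R]_n :=
  \row_c (if (c < l)%N then z' 0 c else z 0 c).

Lemma path_ptS n (z z' : 'rV[R]_n) (j : 'I_n) :
  path_pt z z' j.+1 = path_pt z z' j + (z' 0 j - z 0 j) *: evec R j.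
Proof.
apply/rowP => c; rewrite !mxE /= ltnS leq_eqVlt eq_sym.
have [->|cj] := eqVneq j c.
  by rewrite eqxx ltnn /= mulr1; ring.
rewrite (_ : (j == c :> nat) = false); last exact: negbTE cj.
by rewrite /= mulr0 addr0.
Qed.

Lemma path_pt0 n (z z' : 'rV[R]_n) : path_pt z z' 0 = z.
Proof. by apply/rowP => c; rewrite !mxE. Qed.

Lemma path_ptn n (z z' : 'rV[R]_n) : path_pt z z' n = z'.
Proof. by apply/rowP => c; rewrite !mxE ltn_ord. Qed.

Lemma path_pt_near n (z z' w : 'rV[R]_n) (j : 'I_n) t :
  (0 <= t <= z' 0 j - z 0 j) \/ (z' 0 j - z 0 j <= t <= 0) ->
  `|path_pt z z' j + t *: evec R j - w| <= maxr `|z - w| `|z' - w|.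
Proof.
move=> tin; apply: norm_le_coord => [|i c]; first by rewrite le_max normr_ge0.
rewrite (ord1 i) !mxE /=.
have Hz := coord_le_norm (z - w) 0 c; have Hz' := coord_le_norm (z' - w) 0 c.
rewrite !mxE in Hz Hz'.
set M := maxr _ _.
have HzM : `|z 0 c - w 0 c| <= M by rewrite (le_trans Hz) // le_max lexx.
have Hz'M : `|z' 0 c - w 0 c| <= M by rewrite (le_trans Hz') // le_max lexx orbT.
have [jc|jc] := eqVneq j c.
  subst c; rewrite ltnn mulr1.
  move: HzM Hz'M; rewrite !ler_norml => /andP[a1 a2] /andP[b1 b2].
  apply/andP; split; case: tin => /andP[t1 t2]; lra.
rewrite mulr0 addr0.
by case: ifP => _.
Qed.

Lemma K_est m n (F : 'rV[R]_n -> 'rV[R]_m) (w : 'rV[R]_n) r0 :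
  0 < r0 ->
  (forall z j, `|z - w| < r0 -> derivable F z (evec R j)) ->
  (forall j, {for w, continuous (pderiv j F)}) ->
  forall eps, 0 < eps -> exists2 r, 0 < r & r <= r0 /\
   forall z z', `|z - w| < r -> `|z' - w| < r ->
   `|F z' - F z - (z' - z) *m (Defs.jacobian F w)^T| <= eps * `|z' - z|.
Proof.
move=> r00 Hd Hc eps e0.
pose e' := eps / n.+1%:R.
have e'0 : 0 < e' by rewrite divr_gt0.
have H1 : forall j : 'I_n, \forall z \near w, `|pderiv j F w - pderiv j F z| < e'.
  by move=> j; have := Hc j; move/cvgrPdist_lt => /(_ _ e'0).
have Hnear := @filter_forall _ _ (fun j z => `|pderiv j F w - pderiv j F z| < e') (nbhs w) _ H1.
have [r1 r1pos Hr1] := (nbhs_normP _ _).1 (Hnear _).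
exists (minr r0 r1); first by rewrite lt_min r00 r1pos.
split; first by rewrite ge_min lexx.
move=> z z' zw z'w.
have Mr : maxr `|z - w| `|z' - w| < minr r0 r1 by rewrite gt_max zw z'w.
apply: norm_le_coord => [|i k]; first by rewrite mulr_ge0 // ltW.
rewrite (ord1 i) !mxE.
have tele : F z' 0 k - F z 0 k =
    \sum_(j < n) (F (path_pt z z' j.+1) 0 k - F (path_pt z z' j) 0 k).
  rewrite -(big_mkord xpredT (fun j => F (path_pt z z' j.+1) 0 k - F (path_pt z z' j) 0 k)).
  by rewrite telescope_sumr // path_pt0 path_ptn.
rewrite tele -sumrB.
apply: (le_trans (ler_norm_sum _ _ _)).
apply: (@le_trans _ _ (\sum_(j < n) e' * `|z' - z|)); last first.
  rewrite sumr_const card_ord -mulr_natl mulrA ler_wpM2r //.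
  rewrite /e' mulrCA ger_pMr // ler_pdivrMr // mul1r ler_nat //.
apply: ler_sum => j _.
rewrite coordB mxE /Defs.jacobian mxE path_ptS.
set h := z' 0 j - z 0 j.
have hle : `|h| <= `|z' - z| by have := coord_le_norm (z' - z) 0 j; rewrite coordB.
apply: (@le_trans _ _ (e' * `|h|)); last by rewrite ler_wpM2l // ltW.
have := @mvt_est R (fun t => F (path_pt z z' j + t *: evec R j) 0 k)
  (fun t => 'D_(evec R j) F (path_pt z z' j + t *: evec R j) 0 k) h
  (pderiv j F w 0 k) e'.
rewrite /= scale0r addr0 mulrC; apply => t tin.
have Hpt := path_pt_near w tin.
have ptr : `|path_pt z z' j + t *: evec R j - w| < minr r0 r1 by apply: le_lt_trans Mr.
move: ptr; rewrite lt_min => /andP[pr0 pr1].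
split; first exact/line_deriv/Hd.
have := Hr1 (path_pt z z' j + t *: evec R j); rewrite /ball_ /= distrC => /(_ pr1) /(_ j).
move=> /ltW; apply: le_trans; rewrite distrC.
exact: coord_le_normB.
Qed.

End Kest.
HB.instance Definition _ (R : realType) (m n : nat) := Complete.on 'M[R]_(m, n).

Lemma zmod_id (V : zmodType) (u u' x x' : V) : (u - x) - (u' - x') = - (x - x' - (u - u')).
Proof. by rewrite opprB !opprD !opprK !addrA [- x + x' + u]addrC !addrA. Qed.

Section Exist.
Variable R : realType.

Lemma exist_zero m n (F : 'rV[R]_n -> 'rV[R]_m) (A : 'M[R]_(n,m)) (B : 'M[R]_(m,n))
    (w : 'rV[R]_n) (r eps : R) :
  B *m A = 1%:M -> 0 < r -> 0 <= eps -> eps * mxsum B <= 2^-1 ->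
  (forall z z', `|z - w| < r -> `|z' - w| < r ->
     `|F z' - F z - (z' - z) *m A| <= eps * `|z' - z|) ->
  forall a, `|a - w| < r / 2 -> 2 * mxsum B * `|F a| < r / 2 ->
  exists z, [/\ F z = 0, `|z - w| < r & `|z - a| <= 2 * mxsum B * `|F a|].
Proof.
move=> BA r0 eps0 epsK HK a aw Fa.
set KB := mxsum B.
have KB0 : 0 <= KB := mxsum_ge0 B.
set rho := 2 * `|F a|.
have rho0 : 0 <= rho by rewrite mulr_ge0.
pose U := [set u : 'rV[R]_m | `|u| <= rho].
pose T := fun u : 'rV[R]_m => u - F (a + u *m B).
have uB u : U u -> `|u *m B| <= rho * KB.
  move=> Uu; apply: le_trans (norm_mulmx _ _) _; exact: ler_wpM2r.
have inball u : U u -> `|a + u *m B - w| < r.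
  move=> /uB Hu.
  rewrite addrAC; apply: le_lt_trans (ler_normD _ _) _.
  have : rho * KB < r / 2 by rewrite /rho mulrAC.
  move=> H; rewrite [r]splitr; apply: ltr_leD => //; exact: le_trans Hu (ltW H).
have lip u u' : U u -> U u' -> `|T u - T u'| <= 2^-1 * `|u - u'|.
  move=> Uu Uu'.
  have E : T u - T u' = - (F (a + u *m B) - F (a + u' *m B)
       - ((a + u *m B) - (a + u' *m B)) *m A).
    rewrite /T (_ : (a + u *m B) - (a + u' *m B) = (u - u') *m B); last first.
      by rewrite mulmxBl opprD addrACA subrr add0r.
    by rewrite -mulmxA BA mulmx1 zmod_id.
  rewrite E normrN; apply: le_trans (HK _ _ (inball _ Uu') (inball _ Uu)) _.
  rewrite (_ : (a + u *m B) - (a + u' *m B) = (u - u') *m B); last first.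
    by rewrite opprD addrACA subrr add0r -mulmxBl.
  apply: le_trans (ler_wpM2l eps0 (norm_mulmx _ _)) _.
  rewrite mulrCA mulrC ler_wpM2r //; by rewrite mulrC.
have TU u : U u -> U (T u).
  move=> Uu; rewrite /U /=.
  have T0 : T 0 = - F a by rewrite /T mul0mx addr0 sub0r.
  have := lip u 0 Uu; rewrite /U /= normr0 => /(_ rho0).
  rewrite T0 subr0 => H.
  rewrite -(subrK (- F a) (T u)).
  apply: le_trans (ler_normD _ _) _.
  rewrite normrN (splitr rho); apply: lerD.
    by apply: le_trans H _; rewrite mulrC ler_wpM2r // invr_ge0.
  by rewrite /rho le_eqVlt; apply/orP; left; apply/eqP; field.
pose Tf : {fun U >-> U} := HB.pack T (isFun.Build _ _ U U T TU).
have ctr : is_contraction Tf.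
  exists (2^-1)%:nng; split; first by rewrite /= invf_lt1 // ltr1n.
  by move=> [x1 x2] [/= Ux1 Ux2]; exact: lip.
have clU : closed U.
  exact: ((continuous_closedP (@normr R 'rV[R]_m)).1 (@norm_continuous _ _)) _ (@closed_le R rho).
have U0 : U 0 by rewrite /U /= normr0.
have [p Up Ep] := banach_fixed_point ctr clU (ex_intro _ 0 U0).
have E2 : F (a + p *m B) = p - Tf p.
  by rewrite /= /T opprB addrCA subrr addr0.
exists (a + p *m B); split.
- by rewrite E2 -Ep subrr.
- exact: inball.
- rewrite addrAC subrr add0r; apply: le_trans (uB p Up) _.
  by rewrite /rho mulrAC.
Qed.

End Exist.
Section Core.
Variables (R : realType) (n : nat).
Local Notation vec := 'rV[R]_n.

Definition Dset (M : set vec) (x : vec) : set vec :=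
  [set p | M p /\ exists2 r, 0 < r & forall z, M z -> `|z - p| < r -> Lpat x z].

Lemma Dset_Lpat M x p : Dset M x p -> Lpat x p.
Proof. by move=> [Mp [r r0 H]]; apply: H => //; rewrite subrr normr0. Qed.

Lemma core (M : set vec) (x w : vec) :
  C2_submanifold M -> locally_symmetric M -> M w ->
  (forall r, 0 < r -> exists p, Dset M x p /\ `|p - w| < r) -> Dset M x w.
Proof.
move=> [m Hman] [_ Hsym] Mw Hacc.
split => //.
apply: contrapT => Hnot.
have Hq : forall r, 0 < r -> exists q, [/\ M q, `|q - w| < r &
    exists i j, x 0 i = x 0 j /\ q 0 i != q 0 j].
  move=> r r0; apply: contrapT => H; apply: Hnot; exists r => // z Mz zr i j xij.
  apply: contrapT => /eqP ne; apply: H; exists z; split => //; by exists i, j.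
have Lw : Lpat x w.
  move=> i j xij; apply: contrapT => /eqP ne.
  have ne' : 0 < `|w 0 i - w 0 j| by rewrite normr_gt0 subr_eq0.
  have [p [Dp pw]] := Hacc _ (divr_gt0 ne' (ltr0Sn _ 1)).
  have pij := Dset_Lpat Dp xij.
  have h1 := coord_le_normB p w 0 i; have h2 := coord_le_normB p w 0 j.
  rewrite pij in h1.
  have : `|w 0 i - w 0 j| <= `|p 0 j - w 0 j| + `|p 0 j - w 0 i|.
    have -> : w 0 i - w 0 j = (p 0 j - w 0 j) - (p 0 j - w 0 i) by ring.
    exact: ler_normB.
  move: pw; set N := `|w 0 i - w 0 j| => pw H.
  have : N <= 2 * `|p - w| by lra.
  move=> H2; lra.
have [d d0 Hd] := Hsym w Mw.
have [U [F [oU Uw C2 Hrk EMU]]] := Hman w Mw.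
have [r0 r00 HU] := (nbhs_normP _ _).1 (@open_nbhs_nbhs _ w U (conj oU Uw)).
have HU' z : `|z - w| < r0 -> U z by move=> zw; apply: HU; rewrite /ball_ /= distrC.
have Hder : forall z j, `|z - w| < r0 -> derivable F z (evec R j).
  by move=> z j /HU' Uz; have [_ /(_ j) [] ] := C2 z Uz.
have Hcont : forall j, {for w, continuous (pderiv j F)}.
  by move=> j; have [_ /(_ j) [] ] := C2 w Uw.
have MF z : U z -> M z -> F z = 0.
  by move=> Uz Mz; have : (M `&` U) z by []; rewrite EMU => -[].
have FM z : U z -> F z = 0 -> M z.
  by move=> Uz Fz; have : (U `&` [set x | F x = 0]) z by []; rewrite -EMU => -[].
pose A := (Defs.jacobian F w)^T.
have rfA : row_full A by rewrite /row_full mxrank_tr Hrk.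
have [B BA] := row_fullP rfA.
set KB := mxsum B.
have KB0 : 0 <= KB := mxsum_ge0 B.
pose eps := (8 * (KB + 1))^-1.
have eps0 : 0 < eps by rewrite invr_gt0 mulr_gt0 // ltr_wpDl.
have epsKB : eps * (KB + 1) = 8^-1.
  by rewrite /eps; field; rewrite lt0r_neq0 // ltr_wpDl.
have epsK : eps * KB <= 2^-1.
  by move: epsKB; rewrite mulrDr mulr1 => H; lra.
have epsK8 : eps * KB <= 8^-1.
  by move: epsKB; rewrite mulrDr mulr1 => H; lra.
have [r rpos [rr0 HK]] := K_est r00 Hder Hcont eps0.
have dn0 : 0 < d / n.+1%:R by rewrite divr_gt0.
have rq : 0 < minr (r / 4) (d / n.+1%:R) by rewrite lt_min dn0 andbT divr_gt0.
have [q [Mq qw [i [j [xij qij]]]]] := Hq _ rq.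
move: qw; rewrite lt_min => /andP[qw qwd].
have ij : i != j by apply: contraNneq qij => ->.
pose sg := tperm i j.
have sw : pact sg w = w by apply: pact_tperm_fix; apply: Lw.
have eq : eball w d q.
  rewrite /eball /=; apply: le_lt_trans (enorm_le _) _.
  by rewrite mulrC -ltr_pdivlMr.
pose q' := pact sg q.
have ww : eball w d w.
  rewrite /eball /=; apply: le_lt_trans (enorm_le _) _.
  by rewrite subrr normr0 mulr0.
have : (pact sg @` (M `&` eball w d)) q' by exists q.
rewrite (Hd w (conj Mw ww) sg sw) => -[Mq' _].
have q'w : `|q' - w| < r / 4.
  by rewrite /q' -[X in _ - X]sw -pactB; apply: le_lt_trans (norm_pact _ _) qw.
have r4 : r / 4 < r by rewrite ltr_pdivrMr // ltr_pMr // ltr1n.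
have Fq : F q = 0 by apply: MF => //; apply: HU'; lra.
have Fq' : F q' = 0 by apply: MF => //; apply: HU'; lra.
set u := evec R i - evec R j.
have un : `|u| <= 1 by apply: evec_diff_norm.
have uA : `|u *m A| <= eps.
  have := HK q q' (lt_trans qw r4) (lt_trans q'w r4).
  rewrite Fq Fq' subrr sub0r normrN /q' pact_tperm_diff // -scalemxAl !normrZ.
  have c0 : 0 < `|q 0 j - q 0 i| by rewrite normr_gt0 subr_eq0 eq_sym.
  rewrite mulrCA ler_pM2l // => H; apply: le_trans H _.
  by rewrite -[leRHS]mulr1 ler_wpM2l // ltW.
have r40 : 0 < r / 4 by rewrite divr_gt0.
have [p [[Mp [r' r'0 Hp]] pw]] := Hacc _ r40.
have pij : p 0 i = p 0 j by apply: (Hp p Mp); rewrite ?subrr ?normr0.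
pose t := minr (r / 8) (r' / 4).
have t0 : 0 < t by rewrite lt_min !divr_gt0.
have tr : t <= r / 8 by rewrite ge_min lexx.
have tr' : t <= r' / 4 by rewrite ge_min lexx orbT.
pose a := p + t *: u.
have tu : `|t *: u| <= t by rewrite normrZ gtr0_norm // -[leRHS]mulr1 ler_wpM2l // ltW.
have aw : `|a - w| < r / 2.
  rewrite /a addrAC; apply: le_lt_trans (ler_normD _ _) _; lra.
have Fp : F p = 0 by apply: MF => //; apply: HU'; lra.
have FA : `|F a| <= 2 * eps * t.
  have := HK p a (ltac:(lra)) (ltac:(lra)).
  rewrite Fp subr0 /a addrAC subrr add0r -scalemxAl => H.
  have : `|t *: (u *m A)| <= t * eps by rewrite normrZ gtr0_norm // ler_wpM2l // ltW.
  rewrite normrZ gtr0_norm // => H2.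
  have H3 := ler_normD (F (p + t *: u) - t *: (u *m A)) (t *: (u *m A)).
  rewrite subrK normrZ gtr0_norm // in H3.
  have H4 : eps * `|t *: u| <= eps * t by rewrite ler_wpM2l // ltW.
  rewrite /a; lra.
have FA2 : 2 * KB * `|F a| <= t / 2.
  have : KB * `|F a| <= KB * (2 * eps * t) by rewrite ler_wpM2l.
  move=> H; nra.
have Fa' : 2 * mxsum B * `|F a| < r / 2 by rewrite -/KB; lra.
have [z [Fz zw za]] := exist_zero BA rpos (ltW eps0) epsK HK aw Fa'.
rewrite -/KB in za.
have Mz : M z by apply: FM => //; apply: HU'; lra.
have zp : `|z - p| < r'.
  have : z - p = (z - a) + t *: u by rewrite /a opprD addrA subrK.
  move=> ->; apply: le_lt_trans (ler_normD _ _) _; lra.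
have zij := Hp z Mz zp i j xij.
have ai : a 0 i = p 0 i + t.
  rewrite !mxE; rewrite (negbTE ij) (eqxx i) /=; ring.
have aj : a 0 j = p 0 j - t.
  rewrite !mxE; rewrite eq_sym (negbTE ij) (eqxx j) /=; ring.
have h1 := coord_le_normB z a 0 i; have h2 := coord_le_normB z a 0 j.
rewrite ai in h1; rewrite aj in h2.
move: h1 h2; rewrite !ler_norml => /andP[h1 h1'] /andP[h2 h2'].
lra.
Qed.


Lemma Dset_all (M : set vec) (x : vec) :
  connected M -> C2_submanifold M -> locally_symmetric M ->
  Dset M x !=set0 -> Dset M x = M.
Proof.
move=> conM manM symM ne.
apply: conM => //.
- exists [set z | exists2 r, 0 < r & forall z', M z' -> `|z' - z| < r -> Lpat x z'];
    last by [].
  rewrite openE => z [r r0 Hr].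
  apply/(nbhs_normP z); exists (r / 2); first by rewrite /= divr_gt0.
  move=> z'' zz''; exists (r / 2); first by rewrite divr_gt0.
  move=> z' Mz' z'z''; apply: Hr => //.
  have : z' - z = (z' - z'') + (z'' - z) by rewrite addrA subrK.
  move=> ->; apply: le_lt_trans (ler_normD _ _) _.
  move: zz''; rewrite /ball_ /= distrC => H; lra.
- exists (closure (Dset M x)); first exact: closed_closure.
  apply/seteqP; split => [p Dp|w [Mw clw]].
    by split; [case: Dp|exact: subset_closure].
  apply: core => // r r0.
  have : nbhs w (ball_ normr w r).
    by apply/(nbhs_normP w); exists r => // z; rewrite /ball_ /=.
  move=> /clw [p [Dp pw]]; exists p; split => //.
  by move: pw; rewrite /ball_ /= distrC.
Qed.

End Core.
Section Final.
Variables (R : realType) (n : nat).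
Local Notation vec := 'rV[R]_n.

Definition cnt (z : vec) := #|[set ij : 'I_n * 'I_n | z 0 ij.1 != z 0 ij.2]%SET|.

Lemma near_distinct1 (x0 : vec) (ij : 'I_n * 'I_n) :
  nbhs x0 (fun z : vec => x0 0 ij.1 != x0 0 ij.2 -> z 0 ij.1 != z 0 ij.2).
Proof.
case: ij => i j /=.
have [e|ne] := eqVneq (x0 0 i) (x0 0 j).
  by apply/(nbhs_normP x0); exists 1; [rewrite /= ltr01 | move=> z _].
have ne' : 0 < `|x0 0 i - x0 0 j| by rewrite normr_gt0 subr_eq0.
apply/(nbhs_normP x0); exists (`|x0 0 i - x0 0 j| / 2); first by rewrite /= divr_gt0.
move=> z; rewrite /ball_ /= => zx _; apply/eqP => zij.
have h1 := coord_le_normB x0 z 0 i; have h2 := coord_le_normB x0 z 0 j.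
rewrite zij in h1.
have : `|x0 0 i - x0 0 j| <= `|x0 0 j - z 0 j| + `|x0 0 i - z 0 j|.
  have -> : x0 0 i - x0 0 j = (x0 0 i - z 0 j) - (x0 0 j - z 0 j) by ring.
  by rewrite [leRHS]addrC; exact: ler_normB.
lra.
Qed.

Lemma near_distinct (x0 : vec) :
  nbhs x0 (fun z : vec => forall ij : 'I_n * 'I_n,
     x0 0 ij.1 != x0 0 ij.2 -> z 0 ij.1 != z 0 ij.2).
Proof.
exact: (@filter_forall _ _ (fun ij (z : vec) => x0 0 ij.1 != x0 0 ij.2 -> z 0 ij.1 != z 0 ij.2) (nbhs x0) _ (near_distinct1 x0)).
Qed.

End Final.

Theorem corollary3p24 (R : realType) (n : nat) (M : set 'rV[R]_n)
    (s : {perm 'I_n}) (y : 'rV[R]_n) (rho : R) :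
  locally_symmetric_C2_submanifold M ->
  M y -> 0 < rho -> M `&` eball y rho `<=` Delta s ->
  forall (xbar : 'rV[R]_n) (delta : R), M xbar -> 0 < delta ->
    M `&` Delta s `&` eball xbar delta !=set0.
Proof.
move=> [conM manM symM] My rho0 Hy xbar delta Mxbar delta0.
have eballc (c z : 'rV[R]_n) e : 0 < e -> `|z - c| < e / n.+1%:R -> eball c e z.
  move=> e0 H; rewrite /eball /=; apply: le_lt_trans (enorm_le _) _.
  by rewrite mulrC -ltr_pdivlMr.
have Dy : Delta s y.
  apply: Hy; split => //; apply: eballc => //; by rewrite subrr normr0 divr_gt0.
have DyM : Dset M y = M.
  apply: Dset_all => //; exists y; split => //.
  exists (rho / n.+1%:R); first by rewrite divr_gt0.
  move=> z Mz zy; have Dz : Delta s z by apply: Hy; split => //; exact: eballc.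
  apply: Pvec_Lpat; move: Dz Dy; rewrite /Delta /= => -> ->.
  done.
have Ly z : M z -> Lpat y z by rewrite -DyM => /Dset_Lpat.
set d' := delta / n.+1%:R.
have d'0 : 0 < d' by rewrite divr_gt0.
pose S := fun z => M z /\ `|z - xbar| < d'.
pose P := fun k => `[< exists z, S z /\ cnt z = k >].
have exP : exists k, P k.
  exists (cnt xbar); apply/asboolP; exists xbar; split => //; split => //.
  by rewrite subrr normr0.
have ubP : forall k, P k -> (k <= n * n)%N.
  move=> k /asboolP [z [_ <-]]; rewrite /cnt.
  by apply: leq_trans (max_card _) _; rewrite card_prod card_ord.
case: (ex_maxnP exP ubP) => k /asboolP [x0 [[Mx0 x0b] cx0]] kmax.
have Dx0 : Dset M x0 x0.
  split => //.
  have [r2 r20 Hr2] := (nbhs_normP _ _).1 (near_distinct x0).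
  exists (minr (d' - `|x0 - xbar|) r2).
    by rewrite lt_min subr_gt0 x0b r20.
  move=> z Mz; rewrite lt_min => /andP[zx0 zr2].
  have Sz : S z.
    split => //; have : z - xbar = (z - x0) + (x0 - xbar) by rewrite addrA subrK.
    move=> ->; apply: le_lt_trans (ler_normD _ _) _; lra.
  have sub : [set ij : 'I_n * 'I_n | x0 0 ij.1 != x0 0 ij.2]%SET \subset
             [set ij : 'I_n * 'I_n | z 0 ij.1 != z 0 ij.2]%SET.
    apply/fintype.subsetP => ij; rewrite !inE; apply: (Hr2 z) ; by rewrite /ball_ /= distrC.
  have cz : (cnt z <= k)%N by apply: kmax; apply/asboolP; exists z.
  have eqS : [set ij : 'I_n * 'I_n | x0 0 ij.1 != x0 0 ij.2]%SET =
             [set ij : 'I_n * 'I_n | z 0 ij.1 != z 0 ij.2]%SET.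
    have ecard : #|[set ij : 'I_n * 'I_n | x0 0 ij.1 != x0 0 ij.2]%SET| =
                 #|[set ij : 'I_n * 'I_n | z 0 ij.1 != z 0 ij.2]%SET|.
      apply/anti_leq; rewrite subset_leq_card //=.
      by move: cz; rewrite /cnt -cx0.
    by apply/finset.setP; exact: (elimT (subset_cardP ecard) sub).
  move=> i j xij; apply/eqP; apply: contraT => zij.
  have : (i, j) \in [set ij : 'I_n * 'I_n | z 0 ij.1 != z 0 ij.2]%SET by rewrite inE.
  by rewrite -eqS inE /= xij eqxx.
have Dx0M : Dset M x0 = M by apply: Dset_all => //; exists x0.
have L1 : Lpat x0 y by move: My; rewrite -Dx0M => /Dset_Lpat.
have L2 : Lpat y x0 := Ly x0 Mx0.
exists x0; split; [split|] => //.
  by rewrite /Delta /= (Lpat_Pvec L1 L2); move: Dy; rewrite /Delta /=.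
exact: eballc.
Qed.
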